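(* There exist a constant $c>0$ and, for infinitely many $T$, a sequence of multiclass outcomes $\mathbf x\in[K]^T$ and forecasts $\mathbf p\in\Delta_K^T$ (with $K=3$) such that $\mathrm{Reg}_\ell(\mathbf p,\mathbf x)\le0$ for every bounded separable scoring rule $\ell$, but $\mathrm{MaxAgentReg}(\mathbf p,\mathbf x)\ge cT$.
   Context: $\Delta_K$ is the probability simplex in $\mathbb R^K$, outcome $i$ identified with $e_i$. A multiclass scoring rule is $\ell:\Delta_K\times[K]\to\mathbb R$; with $\ell(p;q)=\sum_iq_i\ell(p,i)$ it is proper if $\ell(p;p)\le\ell(p';p)$ for all $p,p'\in\Delta_K$, and bounded if its values lie in $[-1,1]$; $\mathcal L$ is the set of bounded proper multiclass scoring rules. A multiclass scoring rule is separable if $\ell(p,x)=\sum_{i=1}^K\ell_i(p_i,\mathbf 1(x=i))$ for some proper binary scoring rules $\ell_i:[0,1]\times\{0,1\}\to\mathbb R$ (binary properness: $(1-q)\ell_i(q,0)+q\ell_i(q,1)\le(1-q)\ell_i(q',0)+q\ell_i(q',1)$ for all $q,q'\in[0,1]$). With $\beta=\frac1T\sum_te_{x_t}$, $\mathrm{Reg}_\ell(\mathbf p,\mathbf x)=\sum_t\ell(p_t,x_t)-\sum_t\ell(\beta,x_t)$ and $\mathrm{MaxAgentReg}(\mathbf p,\mathbf x)=\sup_{\ell\in\mathcal L}\mathrm{Reg}_\ell(\mathbf p,\mathbf x)$. *)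

(* Defs.v *)
From HB Require Import structures.
From mathcomp Require Import all_boot all_order all_algebra.
From mathcomp Require Import all_classical all_reals.
Set Implicit Arguments. Unset Strict Implicit. Unset Printing Implicit Defensive.
Import Order.TTheory GRing.Theory Num.Theory.
Local Open Scope ring_scope.
Local Open Scope classical_set_scope.

Section Defs.
Variable R : realType.

Definition in_simplex (K : nat) (p : 'I_K -> R) : Prop :=
  (forall i, 0 <= p i) /\ \sum_(i < K) p i = 1.

(* multiclass scoring rule l : Delta_K x [K] -> R (values off the simplex irrelevant) *)
Definition scoring_rule (K : nat) := ('I_K -> R) -> 'I_K -> R.

Definition exp_score (K : nat) (l : scoring_rule K) (p q : 'I_K -> R) : R :=
  \sum_(i < K) q i * l p i.

Definition proper (K : nat) (l : scoring_rule K) : Prop :=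
  forall p p', in_simplex p -> in_simplex p' -> exp_score l p p <= exp_score l p' p.

Definition bounded (K : nat) (l : scoring_rule K) : Prop :=
  forall p, in_simplex p -> forall i, -1 <= l p i <= 1.

Definition bounded_proper_rules (K : nat) : set (scoring_rule K) :=
  [set l | proper l /\ bounded l].

Definition binary_proper (lb : R -> bool -> R) : Prop :=
  forall q q', 0 <= q <= 1 -> 0 <= q' <= 1 ->
    (1 - q) * lb q false + q * lb q true <= (1 - q) * lb q' false + q * lb q' true.

Definition separable (K : nat) (l : scoring_rule K) : Prop :=
  exists lb : 'I_K -> R -> bool -> R,
    (forall i, binary_proper (lb i)) /\
    forall p, in_simplex p -> forall x : 'I_K,
      l p x = \sum_(i < K) lb i (p i) (x == i).

Definition empirical (K T : nat) (x : 'I_T -> 'I_K) : 'I_K -> R :=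
  fun i => (#|[set t | x t == i]|)%:R / T%:R.

Definition Reg (K T : nat) (l : scoring_rule K) (p : 'I_T -> 'I_K -> R)
    (x : 'I_T -> 'I_K) : R :=
  \sum_(t < T) l (p t) (x t) - \sum_(t < T) l (empirical x) (x t).

Definition MaxAgentReg (K T : nat) (p : 'I_T -> 'I_K -> R) (x : 'I_T -> 'I_K) : R :=
  sup [set Reg l p x | l in @bounded_proper_rules K].

End Defs.

(* Main.v *)
Require Import Defs.
From HB Require Import structures.
From mathcomp Require Import all_boot all_order all_algebra.
From mathcomp Require Import all_classical all_reals.
From mathcomp Require Import ring lra zify.
Import Order.TTheory GRing.Theory Num.Theory.
Local Open Scope ring_scope.

Lemma sum_mod3 (R : realType) (F : nat -> R) m :
  \sum_(t < 3 * m) F (t %% 3)%N = (F 0%N + F 1%N + F 2%N) *+ m.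
Proof.
rewrite -(big_mkord xpredT (fun t => F (t %% 3)%N)).
elim: m => [|m IH]; first by rewrite muln0 big_geq.
have -> : (3 * m.+1 = (3 * m).+3)%N by lia.
rewrite !big_nat_recr //= IH mulrS.
have -> : ((3 * m) %% 3 = 0)%N by lia.
have -> : ((3 * m).+1 %% 3 = 1)%N by lia.
have -> : ((3 * m).+2 %% 3 = 2)%N by lia.
set X := _ *+ m; lra.
Qed.

Definition Ord3 (k : nat) : 'I_3 := Ordinal (ltn_pmod k (isT : (0 < 3)%N)).
Definition o0 : 'I_3 := @Ordinal 3 0 isT.
Definition o1 : 'I_3 := @Ordinal 3 1 isT.
Definition o2 : 'I_3 := @Ordinal 3 2 isT.

Lemma Ord3_0 : Ord3 0 = o0. Proof. exact: val_inj. Qed.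
Lemma Ord3_1 : Ord3 1 = o1. Proof. exact: val_inj. Qed.
Lemma Ord3_2 : Ord3 2 = o2. Proof. exact: val_inj. Qed.

Lemma sum3 (R : realType) (F : 'I_3 -> R) : \sum_(i < 3) F i = F o0 + F o1 + F o2.
Proof.
rewrite !big_ord_recr big_ord0 /= add0r.
by congr (F _ + F _ + F _); apply: val_inj.
Qed.

Lemma ord3_cases (P : 'I_3 -> Prop) : P o0 -> P o1 -> P o2 -> forall i, P i.
Proof.
move=> H0 H1 H2 [[|[|[|n]]] Hi] //.
- by rewrite (_ : Ordinal Hi = o0) //; apply: val_inj.
- by rewrite (_ : Ordinal Hi = o1) //; apply: val_inj.
- by rewrite (_ : Ordinal Hi = o2) //; apply: val_inj.
Qed.

Definition P (R : realType) (k : nat) : 'I_3 -> R := fun i =>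
  match k, val i with
  | O, O => 1/2 | O, S O => 1/2 | O, _ => 0
  | S O, O => 0 | S O, S O => 1/2 | S O, _ => 1/2
  | _, O => 1/2 | _, S O => 0 | _, _ => 1/2
  end.

Definition bb (R : realType) : 'I_3 -> R := fun _ => 1/3.

Definition xx (m : nat) : 'I_(3 * m) -> 'I_3 := fun t => Ord3 (t %% 3).
Definition pp (R : realType) (m : nat) : 'I_(3 * m) -> 'I_3 -> R := fun t => P R (t %% 3).

Lemma empirical_xx (R : realType) m : (0 < m)%N -> empirical R (xx m) = bb R.
Proof.
move=> m0; apply: funext => i; rewrite /empirical /bb -sumr_const big_mkcond /=.
under eq_bigr => t _ do rewrite /in_mem /= /in_set asboolb /xx.
rewrite (sum_mod3 _ (fun k => if Ord3 k == i then (1:R) else 0)).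
have -> : ((if Ord3 0 == i then (1:R) else 0) + (if Ord3 1 == i then 1 else 0) + (if Ord3 2 == i then 1 else 0)) = 1.
  by rewrite Ord3_0 Ord3_1 Ord3_2; move: i; apply: ord3_cases => /=; lra.
rewrite natrM -mulr_natl mulr1.
have hm : (m%:R : R) != 0 by rewrite pnatr_eq0 -lt0n.
field; exact: hm.
Qed.

Lemma Reg_dec (R : realType) (l : scoring_rule R 3) m : (0 < m)%N ->
  Reg l (pp R m) (xx m) =
  (l (P R 0) o0 + l (P R 1) o1 + l (P R 2) o2 - (l (bb R) o0 + l (bb R) o1 + l (bb R) o2)) *+ m.
Proof.
move=> m0; rewrite /Reg empirical_xx // /pp /xx.
rewrite (sum_mod3 _ (fun k => l (P R k) (Ord3 k))).
rewrite (sum_mod3 _ (fun k => l (bb R) (Ord3 k))).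
by rewrite Ord3_0 Ord3_1 Ord3_2 mulrnBl.
Qed.

Lemma P_simplex (R : realType) k : in_simplex (P R k).
Proof.
split.
  by case: k => [|[|k]]; apply: ord3_cases => /=; lra.
by rewrite sum3; case: k => [|[|k]] /=; lra.
Qed.

Lemma bb_simplex (R : realType) : in_simplex (bb R).
Proof. by split; [move=> i; rewrite /bb; lra | rewrite sum3 /bb; lra]. Qed.

Lemma sep_le {R : realType} {l : scoring_rule R 3} : separable l ->
  l (P R 0) o0 + l (P R 1) o1 + l (P R 2) o2 <= l (bb R) o0 + l (bb R) o1 + l (bb R) o2.
Proof.
case=> lb [Hp Hl].
have L k := Hl _ (P_simplex R k); have Lb := Hl _ (bb_simplex R).
rewrite !L !Lb !sum3 /bb /= -!val_eqE /= !eqxx.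
have n01 : (0 == 1)%N = false by []. have n02 : (0 == 2)%N = false by [].
have n10 : (1 == 0)%N = false by []. have n12 : (1 == 2)%N = false by [].
have n20 : (2 == 0)%N = false by []. have n21 : (2 == 1)%N = false by [].
rewrite !n01 !n02 !n10 !n12 !n20 !n21.
have E1 : forall i, lb i (1/2) false + lb i (1/2) true <= lb i (1/3) false + lb i (1/3) true.
  move=> i; have := Hp i (1/2) (1/3); lra.
have E2 : forall i, lb i 0 false <= lb i (1/3) false.
  move=> i; have := Hp i 0 (1/3); lra.
have := E1 o0; have := E1 o1; have := E1 o2; have := E2 o0; have := E2 o1; have := E2 o2.
lra.
Qed.

Definition vA (R : realType) (k : nat) : 'I_3 -> R := fun i =>
  match k, nat_of_ord i with
  | O, O => 1/2 | O, S O => -1 | O, _ => 1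
  | S O, O => 1 | S O, S O => 1/2 | S O, _ => -1
  | S (S O), O => -1 | S (S O), S O => 1 | S (S O), _ => 1/2
  | _, _ => 0
  end.

Definition Ev {R : realType} (q : 'I_3 -> R) (k : nat) : R := \sum_(i < 3) q i * vA R k i.
Definition pick {R : realType} (q : 'I_3 -> R) (a b : nat) : nat :=
  if Ev q a <= Ev q b then a else b.
Definition best {R : realType} (q : 'I_3 -> R) : nat := pick q (pick q 0 1) (pick q 2 3).
Definition lrule (R : realType) : scoring_rule R 3 := fun q i => vA R (best q) i.

Lemma pick_le {R : realType} (q : 'I_3 -> R) a b :
  Ev q (pick q a b) <= Ev q a /\ Ev q (pick q a b) <= Ev q b.
Proof.
rewrite /pick; case: ifP => H; first by split => //; lra.
move/negbT: H; rewrite -ltNge => H; split => //; lra.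
Qed.

Lemma best_min {R : realType} (q : 'I_3 -> R) k : (k <= 3)%N -> Ev q (best q) <= Ev q k.
Proof.
rewrite /best.
have [A1 A2] := pick_le q (pick q 0 1) (pick q 2 3).
have [B1 B2] := pick_le q 0 1.
have [C1 C2] := pick_le q 2 3.
case: k => [|[|[|[|k]]]] // _; lra.
Qed.

Lemma best_le3 {R : realType} (q : 'I_3 -> R) : (best q <= 3)%N.
Proof. by rewrite /best /pick; repeat case: ifP. Qed.

Lemma exp_score_lrule {R : realType} (p q : 'I_3 -> R) :
  exp_score (lrule R) p q = Ev q (best p).
Proof. by []. Qed.

Lemma lrule_proper (R : realType) : Defs.proper (lrule R).
Proof.
move=> p p' _ _; rewrite !exp_score_lrule; apply: best_min; exact: best_le3.
Qed.

Lemma vA_bound (R : realType) k i : -1 <= vA R k i <= 1.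
Proof.
move: i; apply: ord3_cases; case: k => [|[|[|k]]] /=; lra.
Qed.

Lemma lrule_bounded (R : realType) : Defs.bounded (lrule R).
Proof. by move=> p _ i; apply: vA_bound. Qed.

Ltac decide_ifs :=
  repeat (case: ifP; [ first [ move=> ?; exfalso; lra | move=> _ ]
                     | first [ move/negbT; rewrite -ltNge => ?; exfalso; lra | move=> _ ] ]).

Lemma best_P0 (R : realType) : best (P R 0) = 0%N.
Proof.
rewrite /best.
have -> : pick (P R 0) 0 1 = 0%N by rewrite /pick /Ev /bb !sum3 /=; decide_ifs.
have -> : pick (P R 0) 2 3 = 2%N by rewrite /pick /Ev /bb !sum3 /=; decide_ifs.
by rewrite /pick /Ev /bb !sum3 /=; decide_ifs.
Qed.

Lemma best_P1 (R : realType) : best (P R 1) = 1%N.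
Proof.
rewrite /best.
have -> : pick (P R 1) 0 1 = 1%N by rewrite /pick /Ev /bb !sum3 /=; decide_ifs.
have -> : pick (P R 1) 2 3 = 3%N by rewrite /pick /Ev /bb !sum3 /=; decide_ifs.
by rewrite /pick /Ev /bb !sum3 /=; decide_ifs.
Qed.

Lemma best_P2 (R : realType) : best (P R 2) = 2%N.
Proof.
rewrite /best.
have -> : pick (P R 2) 0 1 = 1%N by rewrite /pick /Ev /bb !sum3 /=; decide_ifs.
have -> : pick (P R 2) 2 3 = 2%N by rewrite /pick /Ev /bb !sum3 /=; decide_ifs.
by rewrite /pick /Ev /bb !sum3 /=; decide_ifs.
Qed.

Lemma best_bb (R : realType) : best (bb R) = 3%N.
Proof.
rewrite /best.
have -> : pick (bb R) 0 1 = 0%N by rewrite /pick /Ev /bb !sum3 /=; decide_ifs.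
have -> : pick (bb R) 2 3 = 3%N by rewrite /pick /Ev /bb !sum3 /=; decide_ifs.
by rewrite /pick /Ev /bb !sum3 /=; decide_ifs.
Qed.


Lemma Reg_lrule (R : realType) m : (0 < m)%N ->
  Reg (lrule R) (pp R m) (xx m) = (3/2) * m%:R.
Proof.
move=> m0; rewrite Reg_dec // /lrule best_P0 best_P1 best_P2 best_bb /= -mulr_natr.
lra.
Qed.

Theorem corollary5p6 (R : realType) :
  exists c : R, 0 < c /\
  forall N : nat, exists T : nat, (N <= T)%N /\
  exists (x : 'I_T -> 'I_3) (p : 'I_T -> 'I_3 -> R),
    (forall t, in_simplex (p t)) /\
    (forall l : scoring_rule R 3, separable l -> bounded l -> Reg l p x <= 0) /\
    c * T%:R <= MaxAgentReg p x.
Proof.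
exists (1/2); split; first lra.
move=> N; exists (3 * N.+1)%N; split; first lia.
have m0 : (0 < N.+1)%N by [].
have hm : (0 : R) <= N.+1%:R by apply: ler0n.
exists (xx N.+1), (pp R N.+1); split; first by move=> t; apply: P_simplex.
split.
  move=> l Hs _; rewrite Reg_dec // -mulr_natr.
  have := sep_le Hs; nra.
apply: (@le_trans _ _ (Reg (lrule R) (pp R N.+1) (xx N.+1))).
  rewrite Reg_lrule // natrM; lra.
apply: ub_le_sup; last first.
  by exists (lrule R) => //; split; [exact: lrule_proper | exact: lrule_bounded].
exists (6 * N.+1%:R) => y [l [_ Hb] <-].
rewrite Reg_dec // -mulr_natr.
have B k (i : 'I_3) := Hb _ (P_simplex R k) i.
have Bb (i : 'I_3) := Hb _ (bb_simplex R) i.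
have := B 0%N o0; have := B 1%N o1; have := B 2%N o2.
have := Bb o0; have := Bb o1; have := Bb o2.
nra.
Qed.
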